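(* Let $G$ be a graph of order $n$, not isomorphic to the complete graph $K_n$, such that $\tau(G)=\tau>\frac{n}{2}$. Then $\tau\le\beta_p(G)\le\frac{n+\tau}{2}$. Moreover, if $W$ is its $\tau$-set, then (1) $\beta_p(G)=\tau$ if and only if $G[W]\cong\overline{K_\tau}$; and (2) $\tau<\beta_p(G)\le\frac{n+\tau}{2}$ if and only if $G[W]\cong K_\tau$.
   Context: All graphs are finite, simple, undirected and connected. Two vertices $u,v$ are twins if $N(u)\setminus\{v\}=N(v)\setminus\{u\}$; twin classes are the equivalence classes of this relation, and the twin number $\tau(G)$ is the maximum cardinality of a twin class. A twin set is a set of pairwise twin vertices; a $\tau$-set is a twin set of cardinality $\tau(G)$ (it is unique when $\tau(G)>n/2$). $G[W]$ is the induced subgraph. For a partition $\Pi=\{S_1,\dots,S_k\}$ of $V(G)$, $r(u|\Pi)=(d(u,S_1),\dots,d(u,S_k))$ with $d(u,S)=\min_{w\in S}d(u,w)$; $\Pi$ is locating if $r(u|\Pi)\ne r(v|\Pi)$ for all distinct $u,v$; $\beta_p(G)$ is the minimum size of a locating partition. *)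

(* Defs.v *)
From mathcomp Require Import all_boot.
Set Implicit Arguments. Unset Strict Implicit. Unset Printing Implicit Defensive.

Section Graph.
Variable T : finType.
Variable e : rel T.

Definition simple_graph : Prop := irreflexive e /\ symmetric e.
Definition connected_graph : Prop := forall u v : T, connect e u v.

Fixpoint within (k : nat) (u v : T) : bool :=
  match k with
  | 0 => u == v
  | k'.+1 => within k' u v || [exists w, within k' u w && e w v]
  end.

(* graph distance (for connected graphs it is < #|T|) *)
Definition dist (u v : T) : nat := find (fun k => within k u v) (iota 0 #|T|).

Definition dist_set (u : T) (S : {set T}) : nat :=
  \big[minn/#|T|]_(w in S) dist u w.

Definition nbhd (u : T) : {set T} := [set w | e u w].

Definition twins (u v : T) : bool := (nbhd u :\ v) == (nbhd v :\ u).

Definition twin_class (u : T) : {set T} := [set v | twins u v].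

Definition twin_number : nat := \max_(u : T) #|twin_class u|.

Definition twin_set (W : {set T}) : Prop :=
  forall u v, u \in W -> v \in W -> twins u v.

(* locating partition: a partition of V(G) such that the vectors of
   distances r(u|Pi) are pairwise distinct, i.e. any two distinct vertices
   are at different distance from some part *)
Definition locating_partition (P : {set {set T}}) : bool :=
  partition P [set: T] &&
  [forall u, forall v, (u != v) ==> [exists S in P, dist_set u S != dist_set v S]].

(* partition dimension: minimum size of a locating partition
   (the singleton partition is always locating, so #|T| is a valid default) *)
Definition partition_dim : nat :=
  \big[minn/#|T|]_(P : {set {set T}} | locating_partition P) #|P|.

(* G[W] is isomorphic to the edgeless graph on |W| vertices *)
Definition induced_edgeless (W : {set T}) : Prop :=
  forall u v, u \in W -> v \in W -> ~~ e u v.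

(* G[W] is isomorphic to the complete graph on |W| vertices *)
Definition induced_complete (W : {set T}) : Prop :=
  forall u v, u \in W -> v \in W -> u != v -> e u v.

Definition complete_graph : Prop := forall u v : T, u != v -> e u v.

End Graph.

(* Main.v *)
Require Import Defs.
From mathcomp Require Import all_boot.
From mathcomp Require Import zify.
Set Implicit Arguments. Unset Strict Implicit. Unset Printing Implicit Defensive.

Section G.
Variable T : finType.
Variable e : rel T.
Hypothesis Hirr : irreflexive e.
Hypothesis Hsym : symmetric e.

Lemma within_mono k u v : within e k u v -> within e k.+1 u v.
Proof. by move=> h /=; rewrite h. Qed.

Lemma within_refl k u : within e k u u.
Proof. by elim: k => [|k IH] /=; rewrite ?eqxx ?IH. Qed.

Lemma within0 u v : within e 0 u v = (u == v).
Proof. by []. Qed.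

Lemma within1 u v : within e 1 u v = (u == v) || e u v.
Proof.
rewrite /=; congr (_ || _); apply/existsP/idP => [[w /andP[/eqP-> ->]]//|h].
by exists u; rewrite eqxx h.
Qed.

Lemma within_le_mono i j u v : i <= j -> within e i u v -> within e j u v.
Proof.
move=> /subnK <-; elim: (j - i) => [//|k IH] h.
by rewrite addSn; apply: within_mono; apply: IH.
Qed.

Lemma dist_le k u v : k < #|T| -> (dist e u v <= k) = within e k u v.
Proof.
move=> kn; rewrite /dist; set p := fun k => within e k u v.
apply/idP/idP => [h|h].
  have hs : has p (iota 0 #|T|) by rewrite has_find size_iota (leq_ltn_trans h).
  have := nth_find 0 hs; rewrite nth_iota; last by rewrite -{2}(size_iota 0 #|T|) -has_find.
  by rewrite add0n => hp; apply: within_le_mono hp.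
rewrite leqNgt; apply/negP => hk.
by have := before_find 0 hk; rewrite nth_iota // add0n /p h.
Qed.

Lemma dist_le_n u v : dist e u v <= #|T|.
Proof. by rewrite /dist -{2}(size_iota 0 #|T|) find_size. Qed.

Lemma bigmin_le (I : finType) (p : pred I) (F : I -> nat) d k :
  (\big[minn/d]_(w | p w) F w <= k) = (d <= k) || [exists w, p w && (F w <= k)].
Proof.
apply/idP/idP => [|/orP[h|/existsP[w /andP[wS h]]]].
- apply: (big_rec (fun m => (m <= k) -> (d <= k) || [exists w, p w && (F w <= k)])).
  + by move=> ->.
  + move=> w x wS hx; rewrite geq_min => /orP[h|/hx //].
    by apply/orP; right; apply/existsP; exists w; rewrite wS.
- apply: leq_trans h; apply: (big_rec (fun m => m <= d)) => // i x _ hx.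
  by rewrite geq_min hx orbT.
- rewrite -big_filter; apply: leq_trans h.
  have : w \in [seq i <- index_enum I | p i] by rewrite mem_filter wS mem_index_enum.
  elim: [seq i <- _ | _] => [//|a s IH]; rewrite big_cons inE => /orP[/eqP<-|/IH h].
    by rewrite geq_minl.
  by rewrite geq_min h orbT.
Qed.

Lemma bigmin_ge (I : finType) (p : pred I) (F : I -> nat) d k :
  k <= d -> (forall i, p i -> k <= F i) -> k <= \big[minn/d]_(w | p w) F w.
Proof.
move=> hd hF; apply: (big_rec (fun m => k <= m)) => // i x pi hx.
by rewrite leq_min hF.
Qed.

Lemma dset_le0 u S : (dist_set e u S <= 0) = (u \in S).
Proof.
have n0 : 0 < #|T| by apply/card_gt0P; exists u.
rewrite /dist_set bigmin_le leqn0 (negbTE (lt0n_neq0 n0)) /=.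
apply/existsP/idP => [[w /andP[wS]]|uS]; first by rewrite (dist_le _ _ n0) => /eqP->.
by exists u; rewrite uS (dist_le _ _ n0) /= eqxx.
Qed.

Lemma dset_le1 u S : 1 < #|T| -> (dist_set e u S <= 1) = [exists w in S, (u == w) || e u w].
Proof.
move=> n1; rewrite /dist_set bigmin_le leqNgt n1 /=.
by apply: eq_existsb => w; rewrite (dist_le _ _ n1) within1.
Qed.

Lemma twinsP u v : reflect (forall x, x != u -> x != v -> e u x = e v x) (twins e u v).
Proof.
apply: (iffP eqP) => [h x xu xv|h].
  by have := congr1 (fun A : {set T} => x \in A) h; rewrite /= !inE xu xv /=.
apply/setP => x; rewrite !inE.
have [->|xu] := eqVneq x u; first by rewrite Hirr andbF.
have [->|xv] := eqVneq x v; first by rewrite Hirr.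
by rewrite h.
Qed.

Lemma twins_refl u : twins e u u.
Proof. by apply/twinsP. Qed.

Lemma twins_sym u v : twins e u v -> twins e v u.
Proof. by move/twinsP => h; apply/twinsP => x xv xu; rewrite h. Qed.

Lemma twins_trans a b c : twins e a b -> twins e b c -> twins e a c.
Proof.
move=> /twinsP hab /twinsP hbc; apply/twinsP => x xa xc.
have [xb|xb] := eqVneq x b; last by rewrite hab // hbc.
subst x; have [ac|ac] := eqVneq a c; first by rewrite ac.
have h1 : e b a = e c a by apply: hbc; rewrite // eq_sym.
have h2 : e a c = e b c by apply: hab; rewrite eq_sym.
by rewrite (Hsym a b) h1 (Hsym c a) h2 Hsym.
Qed.

Lemma twins_within u v k z : twins e u v -> z != u -> within e k u z -> within e k v z.
Proof.
move=> /twinsP tw; elim: k z => [|k IH] z zu /=; first by rewrite eq_sym (negbTE zu).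
case/orP => [/IH->//|/existsP[w /andP[hw ewz]]].
have [wu|wu] := eqVneq w u; last first.
  by apply/orP; right; apply/existsP; exists w; rewrite ewz IH.
subst w; have [zv|zv] := eqVneq z v; first by rewrite zv within_refl.
by apply/orP; right; apply/existsP; exists v; rewrite within_refl -tw.
Qed.

Lemma twins_dist u v z : twins e u v -> z != u -> z != v -> dist e u z = dist e v z.
Proof.
move=> tw zu zv; rewrite /dist; apply: eq_find => k.
apply/idP/idP; first exact: twins_within.
by apply: twins_within => //; apply: twins_sym.
Qed.

Lemma twins_dset u v (S : {set T}) : twins e u v -> u \notin S -> v \notin S -> dist_set e u S = dist_set e v S.
Proof.
move=> tw uS vS; apply: eq_bigr => z zS; apply: twins_dist => //.
  by apply: contraNneq uS => <-.
by apply: contraNneq vS => <-.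
Qed.


Lemma not_in_pblock_diff (P : {set {set T}}) u v :
  partition P [set: T] -> pblock P u = pblock P v -> forall S, S \in P -> (u \in S) = (v \in S).
Proof.
move=> /and3P[/eqP cov tI _] huv S SP.
have cu : u \in cover P by rewrite cov inE.
have cv : v \in cover P by rewrite cov inE.
apply/idP/idP => h.
  by rewrite -(def_pblock tI SP h) huv mem_pblock.
by rewrite -(def_pblock tI SP h) -huv mem_pblock.
Qed.

Lemma twins_sep (P : {set {set T}}) u v : locating_partition e P -> twins e u v -> u != v ->
  pblock P u != pblock P v.
Proof.
move=> /andP[pP /forallP /(_ u) /forallP /(_ v) /implyP loc] tw uv; apply/negP => /eqP huv.
have [S /andP[SP /negP]] := existsP (loc uv); apply.
have := not_in_pblock_diff pP huv SP.
case uS: (u \in S) => /esym vS.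
  by apply/eqP; apply/eqP; rewrite eqn_leq (leq_trans _ (leq0n _)) ?dset_le0 // (leq_trans _ (leq0n _)) // dset_le0.
by apply/eqP; apply: twins_dset => //; rewrite ?uS ?vS.
Qed.


Lemma twinset_le_P (P : {set {set T}}) (W : {set T}) :
  locating_partition e P -> twin_set e W -> #|W| <= #|P|.
Proof.
move=> loc tW; have pP := andP loc; case: pP => pP _.
have /and3P[/eqP cov _ _] := pP.
rewrite -(card_in_imset (f := pblock P)); last first.
  move=> u v uW vW huv; case: (eqVneq u v) => // uv.
  by have := twins_sep loc (tW u v uW vW) uv; rewrite huv eqxx.
apply: subset_leq_card; apply/subsetP => _ /imsetP[u uW ->].
by apply: pblock_mem; rewrite cov inE.
Qed.

Lemma twin_class_card u : #|twin_class e u| <= twin_number e.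
Proof. exact: (@leq_bigmax _ (fun u => #|twin_class e u|) u). Qed.

Lemma W_closed (W : {set T}) w z : twin_set e W -> #|W| = twin_number e -> w \in W ->
  twins e w z -> z \in W.
Proof.
move=> tW cW wW twz.
have sub : W \subset twin_class e w by apply/subsetP => x xW; rewrite inE tW.
have : W == twin_class e w by rewrite eqEcard sub cW twin_class_card.
by move/eqP->; rewrite inE.
Qed.

Lemma W_uniform (W : {set T}) a b u v : twin_set e W -> a \in W -> b \in W -> a != b ->
  u \in W -> v \in W -> u != v -> e u v = e a b.
Proof.
move=> tW aW bW ab uW vW uv.
have step x y y' : x \in W -> y \in W -> y' \in W -> y != x -> y' != x -> e x y = e x y'.
  move=> xW yW y'W yx y'x; have [->//|yy'] := eqVneq y y'.
  have /twinsP h := tW y y' yW y'W.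
  by rewrite Hsym h // (eq_sym x) // eq_sym.
have [ua|ua] := eqVneq u a; first by subst u; apply: step; rewrite // eq_sym.
have h1 : e u v = e u a by apply: step; rewrite // eq_sym.
have h2 : e a u = e a b by apply: step; rewrite // eq_sym.
by rewrite h1 Hsym h2.
Qed.


Definition cls (lab : T -> T) z := [set y in [set: T] | lab z == lab y].
Definition lpart (lab : T -> T) := preim_partition lab [set: T].

Lemma lpart_loc lab : (forall u v, u != v -> lab u = lab v ->
   exists z, dist_set e u (cls lab z) != dist_set e v (cls lab z)) ->
  locating_partition e (lpart lab).
Proof.
move=> H; apply/andP; split; first exact: preim_partitionP.
apply/forallP => u; apply/forallP => v; apply/implyP => uv.
have [luv|luv] := eqVneq (lab u) (lab v).
  have [z hz] := H u v uv luv; apply/existsP; exists (cls lab z).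
  by rewrite hz andbT; apply: imset_f; rewrite inE.
apply/existsP; exists (cls lab u); apply/andP; split.
  by apply: imset_f; rewrite inE.
apply/negP => /eqP h.
have : dist_set e u (cls lab u) <= 0 by rewrite dset_le0 !inE eqxx.
by rewrite h dset_le0 !inE (negbTE luv).
Qed.

Lemma lpart_card lab : #|lpart lab| <= #|lab @: [set: T]|.
Proof.
have -> : lpart lab = (fun k => [set y in [set: T] | k == lab y]) @: (lab @: [set: T]).
  by rewrite -imset_comp.
exact: leq_imset_card.
Qed.

Lemma pdim_le P : locating_partition e P -> partition_dim e <= #|P|.
Proof.
move=> lP; rewrite /partition_dim bigmin_le; apply/orP; right.
by apply/existsP; exists P; rewrite lP leqnn.
Qed.


Lemma inj_into (W : {set T}) w0 : w0 \in W -> #|~: W| < #|W| ->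
  exists f : T -> T, exists wst,
   [/\ forall x, x \notin W -> f x \in W, {in ~: W &, injective f}, wst \in W &
     forall x, x \notin W -> f x != wst].
Proof.
move=> w0W lt.
have sR : size (enum (~: W)) = #|~: W| by rewrite cardE.
have sW : size (enum W) = #|W| by rewrite cardE.
have ix x : x \notin W -> index x (enum (~: W)) < #|W|.
  by move=> xW; rewrite (leq_trans _ (ltnW lt)) // -sR index_mem mem_enum inE.
exists (fun x => nth w0 (enum W) (index x (enum (~: W)))), (nth w0 (enum W) #|~: W|).
split.
- by move=> x xW; rewrite -mem_enum mem_nth // sW ix.
- move=> x y; rewrite !inE => xW yW /eqP.
  rewrite nth_uniq ?enum_uniq ?sW ?ix // => /eqP h.
  have xR : x \in enum (~: W) by rewrite mem_enum inE.
  have yR : y \in enum (~: W) by rewrite mem_enum inE.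
  by rewrite -(nth_index x xR) -(nth_index x yR) h.
- by rewrite -mem_enum mem_nth // sW.
- move=> x xW; rewrite nth_uniq ?enum_uniq ?sW ?ix //.
  by rewrite neq_ltn -sR index_mem mem_enum inE xW.
Qed.


Lemma ore (R Needy : {set T}) (h : rel T) : symmetric h -> (forall x y, h x y -> x != y) ->
  (forall x, x \in Needy -> x \in R -> exists2 y, y \in R & h x y) ->
  exists X : {set T}, [/\ X \subset R, 2 * #|R :\: X| <= #|R| &
     forall x, x \in X -> x \in Needy -> exists2 y, y \in R :\: X & h x y].
Proof.
move=> hsym hirr hN.
pose good (D : {set T}) := (D \subset R) &&
   [forall x in R :\: D, (x \in Needy) ==> [exists y in D, h x y]].
have gR : good R by rewrite /good subxx; apply/forallP => x; rewrite setDv inE.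
case: (@arg_minnP _ R good (fun D => #|D|) gR) => D gD minD.
have [DR /forallP gD'] := andP gD.
have claim v : v \in D -> v \in Needy -> exists2 y, y \in R :\: D & h v y.
  move=> vD vN; case: (boolP [exists y in R :\: D, h v y]) => [/existsP[y /andP[]]|nE].
    by exists y.
  suff : good (D :\ v).
    move/minD; rewrite [#|D|](cardsD1 v) vD add1n ltnn //.
  apply/andP; split; first by apply: subset_trans DR; apply: subsetDl.
  apply/forallP => x; apply/implyP; rewrite !inE negb_and negbK => /andP[/orP[/eqP xv|xD] xR].
    subst x; apply/implyP => _; have [y yR hy] := hN v vN xR.
    apply/existsP; exists y; rewrite !inE eq_sym (hirr _ _ hy) /= hy andbT.
    apply: contraNT nE => yD; apply/existsP; exists y; rewrite hy !inE yD yR.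
    done.
  apply/implyP => xN; have := gD' x; rewrite !inE xD xR xN /= => /existsP[y /andP[yD hy]].
  apply/existsP; exists y; rewrite !inE yD andbT hy.
  rewrite andbT; apply/negP => /eqP yv; subst y; move/negP: nE; apply; apply/existsP; exists x.
  by rewrite !inE xD xR hsym hy.
have [small|big] := leqP (2 * #|D|) #|R|.
  exists (R :\: D); split; first exact: subsetDl.
    by rewrite setDDr setDv set0U (setIidPr DR).
  move=> x xX xN; have := gD' x; rewrite xX xN /= => /existsP[y /andP[yD hy]].
  by exists y; rewrite // setDDr setDv set0U (setIidPr DR).
exists D; split => //.
have := cardsID D R; rewrite (setIidPr DR) => hc.
lia.
Qed.


Lemma dset1_le1 u a : 1 < #|T| -> (dist_set e u [set a] <= 1) = (u == a) || e u a.
Proof.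
move=> n1; rewrite dset_le1 //; apply/existsP/idP => [[w /andP[]]|h].
  by rewrite inE => /eqP->.
by exists a; rewrite inE eqxx.
Qed.

Lemma dset2_le1 u a b : 1 < #|T| ->
  (dist_set e u [set a; b] <= 1) = ((u == a) || e u a) || ((u == b) || e u b).
Proof.
move=> n1; rewrite dset_le1 //; apply/existsP/idP => [[w /andP[]]|/orP[h|h]].
- by rewrite !inE => /orP[]/eqP-> ->; rewrite ?orbT.
- by exists a; rewrite !inE eqxx h.
- by exists b; rewrite !inE eqxx h orbT.
Qed.

Lemma neq_le1 m k : (m <= 1) != (k <= 1) -> m != k.
Proof. by apply: contraNneq => ->. Qed.

Lemma Wedge (W : {set T}) w w' y : twin_set e W -> w \in W -> w' \in W -> y \notin W ->
  e w y = e w' y.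
Proof.
move=> tW wW w'W yW; have /twinsP h := tW w w' wW w'W.
by apply: h; apply: contraNneq yW => ->.
Qed.

Section Pair.
Variables (W X : {set T}) (f : T -> T) (wst : T).
Hypotheses (XW : X \subset ~: W) (fW : forall x, x \notin W -> f x \in W)
  (finj : {in ~: W &, injective f}) (wstW : wst \in W)
  (fwst : forall x, x \notin W -> f x != wst).

Definition plab x := if x \in W then x else if x \in X then f x else x.

Lemma XnW x : x \in X -> x \notin W.
Proof. by move=> xX; have := subsetP XW x xX; rewrite inE. Qed.

Lemma cls_wst : cls plab wst = [set wst].
Proof.
apply/setP => t; rewrite !inE /plab wstW.
case: ifP => tW; first by rewrite eq_sym.
have twst : (t == wst) = false by apply/eqP => h; subst; rewrite wstW in tW.
case: ifP => tX; first by rewrite eq_sym (negbTE (fwst (negbT tW))) twst.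
by rewrite twst; apply/eqP => h; subst; rewrite wstW in tW.
Qed.

Lemma cls_out y : y \notin W -> y \notin X -> cls plab y = [set y].
Proof.
move=> yW yX; apply/setP => t; rewrite !inE /plab (negbTE yW) (negbTE yX).
case: ifP => tW; first by rewrite eq_sym.
case: ifP => tX; last by rewrite eq_sym.
have -> : (t == y) = false by apply/eqP => h; subst; rewrite tX in yX.
by apply/eqP => h; move: (fW (negbT tW)); rewrite -h (negbTE yW).
Qed.

Lemma cls_in y : y \notin W -> y \in X -> cls plab y = [set f y; y].
Proof.
move=> yW yX; apply/setP => t; rewrite !inE /plab (negbTE yW) yX.
case: ifP => tW.
  have ->: (t == y) = false by apply/eqP => h; subst; rewrite tW in yW.
  by rewrite orbF eq_sym.
have tfy : (t == f y) = false by apply/eqP => h; move: (fW yW); rewrite -h tW.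
case: ifP => tX.
  by rewrite (inj_in_eq finj) ?inE ?yW ?tW // tfy eq_sym.
have ->: (t == y) = false by apply/eqP => h; subst; rewrite yX in tX.
by rewrite eq_sym tfy.
Qed.

Lemma pair_part : (forall w x, w \in W -> x \in X -> f x = w ->
    exists z, dist_set e w (cls plab z) != dist_set e x (cls plab z)) ->
  partition_dim e <= #|W| + #|~: W :\: X|.
Proof.
move=> H.
have loc : locating_partition e (lpart plab).
  apply: lpart_loc => u v uv.
  have key w x : w \in W -> x \notin W -> plab w = plab x ->
      exists z, dist_set e w (cls plab z) != dist_set e x (cls plab z).
    move=> wW xW; rewrite /plab wW (negbTE xW); case: ifP => xX.
      by move=> h; apply: H => //; rewrite h.
    by move=> h; subst; rewrite wW in xW.
  case: (boolP (u \in W)) => uW; case: (boolP (v \in W)) => vW.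
  - by rewrite /plab uW vW => h; rewrite h eqxx in uv.
  - exact: key.
  - move=> h; have [z hz] := key v u vW uW (esym h); exists z; by rewrite eq_sym.
  - rewrite /plab (negbTE uW) (negbTE vW); case: ifP => uX; case: ifP => vX.
    + move=> h; have huv : u = v by apply: finj; rewrite ?inE.
      by rewrite huv eqxx in uv.
    + by move=> h; have := fW uW; rewrite h (negbTE vW).
    + by move=> h; have := fW vW; rewrite -h (negbTE uW).
    + by move=> h; rewrite h eqxx in uv.
apply: leq_trans (pdim_le loc) _; apply: leq_trans (lpart_card _) _.
have sub : plab @: [set: T] \subset W :|: (~: W :\: X).
  apply/subsetP => _ /imsetP[x _ ->]; rewrite /plab !inE.
  case: ifP => xW; first by rewrite xW.
  case: ifP => xX; first by rewrite fW ?xW.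
  by rewrite xW xX orbT.
apply: leq_trans (subset_leq_card sub) _.
by rewrite cardsU leq_subr.
Qed.

End Pair.


Lemma indep_case (W : {set T}) a b : twin_set e W -> #|W| = twin_number e ->
  a \in W -> b \in W -> a != b -> ~~ e a b -> #|~: W| < #|W| -> 1 < #|T| ->
  partition_dim e <= #|W|.
Proof.
move=> tW cW aW bW ab nab lt n1.
have [f [wst [fW finj wstW fwst]]] := inj_into aW lt.
have noE u v : u \in W -> v \in W -> u != v -> e u v = false.
  by move=> uW vW uv; rewrite (W_uniform tW aW bW ab uW vW uv) (negbTE nab).
have := @pair_part W (~: W) f fW finj.
rewrite setDv cards0 addn0; apply => w x wW; rewrite inE => xW fxw.
case: (boolP [exists z, dist_set e w (cls (plab W (~: W) f) z) != dist_set e x (cls (plab W (~: W) f) z)]).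
  by move/existsP.
rewrite negb_exists => /forallP hz.
have eqz z : dist_set e w (cls (plab W (~: W) f) z) = dist_set e x (cls (plab W (~: W) f) z).
  by apply/eqP; have := hz z; rewrite negbK.
have wwst : w != wst by rewrite -fxw fwst.
have xwst : e x wst = false.
  have := eqz wst; rewrite cls_wst // => h.
  have := congr1 (fun m => m <= 1) h; rewrite /= !dset1_le1 // (negbTE wwst) noE //=.
  by move/esym/norP => [_ /negbTE].
have xW' y : y \in W -> e x y = false.
  move=> yW; rewrite Hsym (Wedge tW yW wstW xW) Hsym; exact: xwst.
have : twins e w x.
  apply/twinsP => y yw yx; case: (boolP (y \in W)) => yW.
    by rewrite (noE w y) // ?xW' // eq_sym.
  have := eqz y; rewrite cls_in ?inE // => h.
  have := congr1 (fun m => m <= 1) h; rewrite /= !dset2_le1 //.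
  have fyw : f y != w by rewrite -fxw; apply: contraNneq yx => /finj; rewrite !inE => ->.
  rewrite (noE w (f y)) // ?fW // 1?eq_sym //.
  rewrite (negbTE fyw).
  have -> : (w == y) = false by apply/eqP => h'; subst; rewrite wW in yW.
  have -> : (x == f y) = false by apply/eqP => h'; move: (fW y yW); rewrite -h' (negbTE xW).
  have -> : (x == y) = false by apply/negbTE; rewrite eq_sym.
  by rewrite xW' ?fW.
by move/(W_closed tW cW wW); rewrite (negbTE xW).
Qed.


Lemma clique_upper (W : {set T}) a b : twin_set e W -> #|W| = twin_number e ->
  a \in W -> b \in W -> a != b -> e a b -> #|~: W| < #|W| -> 1 < #|T| ->
  2 * partition_dim e <= #|T| + #|W|.
Proof.
move=> tW cW aW bW ab eab lt n1.
have [f [wst [fW finj wstW fwst]]] := inj_into aW lt.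
have allE u v : u \in W -> v \in W -> u != v -> e u v.
  by move=> uW vW uv; rewrite (W_uniform tW aW bW ab uW vW uv).
pose h x y := [&& x != y, e a x || e a y & e x y != (e a x && e a y)].
have hsym : symmetric h.
  by move=> x y; rewrite /h eq_sym (Hsym x y) (orbC (e a x)) (andbC (e a x)).
have hirr x y : h x y -> x != y by case/andP.
have hN x : x \in [set z in ~: W | e a z] -> x \in ~: W -> exists2 y, y \in ~: W & h x y.
  rewrite !inE => /andP[xW ax] _.
  case: (boolP [exists y, [&& y != a, y != x & e a y != e x y]]).
    move=> /existsP[y /and3P[ya yx hy]]; exists y.
      rewrite inE; apply/negP => yW; move/negP: hy; apply.
      by rewrite (allE a y) 1?eq_sym // (Hsym x y) (Wedge tW yW aW xW) ax.
    by apply/and3P; split; [rewrite eq_sym | rewrite ax | rewrite ax /= eq_sym].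
  rewrite negb_exists => /forallP hy.
  have : twins e a x.
    apply/twinsP => y ya yx; have := hy y; rewrite ya yx /=.
    by move/negbNE/eqP.
  by move/(W_closed tW cW aW); rewrite (negbTE xW).
have [X [XR hX hXN]] := ore hsym hirr hN.
have := @pair_part W X f fW finj.
have HH : (forall w x, w \in W -> x \in X -> f x = w ->
    exists z, dist_set e w (cls (plab W X f) z) != dist_set e x (cls (plab W X f) z)).
  move=> w x wW xX fxw.
  have xW : x \notin W by have := subsetP XR x xX; rewrite inE.
  have wwst : w != wst by rewrite -fxw fwst.
  case: (boolP (e a x)) => ax.
    have xN : x \in [set z in ~: W | e a z] by rewrite !inE xW ax.
    have [y] := hXN x xX xN.
    rewrite !inE => /andP[yX yW] /and3P[xy _ hxy].
    exists y; rewrite (cls_out fW) //; apply: neq_le1; rewrite !dset1_le1 //.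
    rewrite (negbTE xy) /=.
    have -> : (w == y) = false by apply/eqP => h'; move: yW; rewrite -h' wW.
    rewrite /= (Wedge tW wW aW yW); move: hxy; rewrite ax /=.
    by rewrite eq_sym.
  exists wst; rewrite cls_wst //; apply: neq_le1; rewrite !dset1_le1 // (negbTE wwst) allE //=.
  have -> : (x == wst) = false by apply/eqP => h'; subst; rewrite wstW in xW.
  by rewrite Hsym (Wedge tW wstW aW xW) (negbTE ax).
move/(_ HH) => hp.
have := cardsC W; rewrite cW => hc.
rewrite -cW; lia.
Qed.


Lemma path_cross (W : {set T}) p x : x \in W -> path e x p -> last x p \notin W ->
  exists u v, [/\ u \in W, v \notin W & e u v].
Proof.
elim: p x => [|y p IH] x xW /=; first by rewrite xW.
case/andP => exy hp; case: (boolP (y \in W)) => yW; first exact: IH yW hp.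
by move=> _; exists x, y.
Qed.

Lemma clique_not_tau (W : {set T}) a b x0 : twin_set e W -> #|W| = twin_number e ->
  a \in W -> b \in W -> a != b -> e a b -> x0 \notin W -> e a x0 -> 1 < #|T| ->
  forall P, locating_partition e P -> #|P| != #|W|.
Proof.
move=> tW cW aW bW ab eab x0W ax0 n1 P loc; apply/negP => /eqP cP.
have allE u v : u \in W -> v \in W -> u != v -> e u v.
  by move=> uW vW uv; rewrite (W_uniform tW aW bW ab uW vW uv).
have [pP locP] := andP loc.
have /and3P[/eqP cov tI _] := pP.
have inj : {in W &, injective (pblock P)}.
  move=> u v uW vW huv; case: (eqVneq u v) => // uv.
  by have := twins_sep loc (tW u v uW vW) uv; rewrite huv eqxx.
have sub : pblock P @: W \subset P.
  by apply/subsetP => _ /imsetP[u uW ->]; apply: pblock_mem; rewrite cov inE.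
have eqP' : pblock P @: W = P.
  apply/eqP. rewrite eqEcard sub (card_in_imset inj) /=. by apply: eq_leq; exact: cP.
have : pblock P x0 \in pblock P @: W by rewrite eqP'; apply: pblock_mem; rewrite cov inE.
case/imsetP => w wW hw.
have wx : x0 != w by apply: contraNneq x0W => ->.
have /forallP /(_ x0) /forallP /(_ w) /implyP /(_ wx) /existsP [S /andP[SP]] := locP.
apply/negP; rewrite negbK.
have : S \in pblock P @: W by rewrite eqP'.
case/imsetP => w' w'W ->.
have mem := not_in_pblock_diff pP hw.
set S' := pblock P w'.
have S'P : S' \in P by apply: pblock_mem; rewrite cov inE.
have h1 : dist_set e x0 S' <= 1.
  rewrite dset_le1 //; apply/existsP; exists w'; rewrite mem_pblock cov inE /=.
  by rewrite Hsym (Wedge tW w'W aW x0W) ax0 orbT.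
have h2 : dist_set e w S' <= 1.
  rewrite dset_le1 //; apply/existsP; exists w'; rewrite mem_pblock cov inE /=.
  by case: (eqVneq w w') => // ww'; rewrite allE.
have h0 : (dist_set e x0 S' <= 0) = (dist_set e w S' <= 0).
  by rewrite !dset_le0 mem.
apply/eqP; move: h1 h2 h0; case: (dist_set e x0 S') => [|[|m]] //; case: (dist_set e w S') => [|[|k]] //.
Qed.


Lemma main_W (W : {set T}) : connected_graph e -> ~ complete_graph e ->
  #|T| < 2 * twin_number e -> twin_set e W -> #|W| = twin_number e ->
  twin_number e <= partition_dim e /\
  2 * partition_dim e <= #|T| + twin_number e /\
  (partition_dim e = twin_number e <-> induced_edgeless e W) /\
  ((twin_number e < partition_dim e /\ 2 * partition_dim e <= #|T| + twin_number e)
        <-> induced_complete e W).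
Proof.
move=> con nc hn tW cW.
have tn : twin_number e <= #|T| by rewrite -cW max_card.
case: (boolP [forall u, forall v, (u != v) ==> e u v]) => [/forallP hc|].
  by exfalso; apply: nc => u v uv; have := hc u; move/forallP/(_ v)/implyP; apply.
rewrite negb_forall => /existsP [u]; rewrite negb_forall => /existsP [v].
rewrite negb_imply => /andP[uv nuv].
have n1 : 1 < #|T| by apply/card_gt1P; exists u, v.
have t2 : 1 < #|W| by rewrite cW; lia.
have [a [b [aW bW ab]]] := card_gt1P t2.
have lt : #|~: W| < #|W| by have := cardsC W; rewrite cW; lia.
have lower : twin_number e <= partition_dim e.
  apply: bigmin_ge => // P loc; rewrite -cW; exact: twinset_le_P.
have unif := W_uniform tW aW bW ab.
case eab: (e a b).
- have up := clique_upper tW cW aW bW ab eab lt n1.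
  have [z zW] : exists z, z \notin W.
    case: (boolP (u \in W)) => uW; last by exists u.
    case: (boolP (v \in W)) => vW; last by exists v.
    by move: nuv; rewrite unif // eab.
  have [p pp zl] := connectP (con a z).
  have zl' : last a p \notin W by rewrite -zl.
  have [u' [v' [u'W v'W euv]]] := path_cross aW pp zl'.
  have ax0 : e a v' by rewrite (Wedge tW aW u'W v'W).
  have ne : partition_dim e != twin_number e.
    apply/negP => /eqP pt.
    have : partition_dim e <= twin_number e by rewrite pt.
    rewrite /partition_dim bigmin_le => /orP[|/existsP[P /andP[loc hP]]].
      have := cardsC W; have : 0 < #|~: W| by apply/card_gt0P; exists v'; rewrite inE.
      rewrite cW; lia.
    have := clique_not_tau tW cW aW bW ab eab v'W ax0 n1 loc.
    have := twinset_le_P loc tW.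
    rewrite -cW in hP => h1 /negP; apply; rewrite eqn_leq.
    by apply/andP; split; [exact: hP | exact: h1].
  have ic : induced_complete e W by move=> x y xW yW xy; rewrite unif.
  split => //; split; first by rewrite -cW.
  split; split => //.
  + by move=> pt; rewrite pt eqxx in ne.
  + by move/(_ a b aW bW); rewrite eab.
  + by move=> _; split; [rewrite ltn_neqAle eq_sym ne lower|rewrite -cW].
- have up := indep_case tW cW aW bW ab (negbT eab) lt n1.
  have eq : partition_dim e = twin_number e by apply/eqP; rewrite eqn_leq lower -cW up.
  have ie : induced_edgeless e W.
    move=> x y xW yW; case: (eqVneq x y) => [->|xy]; first by rewrite Hirr.
    by rewrite unif // eab.
  rewrite eq; split => //; split; first lia.
  split; split => //.
  + by case; rewrite ltnn.
  + by move/(_ a b aW bW ab); rewrite eab.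
Qed.

End G.

Theorem theorem18 (T : finType) (e : rel T) :
  simple_graph e -> connected_graph e ->
  ~ complete_graph e ->
  #|T| < 2 * twin_number e ->
  twin_number e <= partition_dim e /\
  2 * partition_dim e <= #|T| + twin_number e /\
  (forall W : {set T}, twin_set e W -> #|W| = twin_number e ->
     (partition_dim e = twin_number e <-> induced_edgeless e W) /\
     ((twin_number e < partition_dim e /\ 2 * partition_dim e <= #|T| + twin_number e)
        <-> induced_complete e W)).
Proof.
move=> [Hirr Hsym] con nc hn.
have n0 : 0 < #|T|.
  case: (pickP (fun _ : T => true)) => [x _|h]; first by apply/card_gt0P; exists x.
  by exfalso; apply: nc => x; have := h x.
have [u0 hu0] := eq_bigmax (fun u => #|twin_class e u|) n0.
pose W0 := twin_class e u0.
have tW0 : twin_set e W0.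
  move=> x y; rewrite !inE => hx hy.
  exact: (twins_trans Hirr Hsym (twins_sym Hirr hx) hy).
have cW0 : #|W0| = twin_number e by rewrite /twin_number hu0.
have [h1 [h2 _]] := main_W Hirr Hsym con nc hn tW0 cW0.
split => //; split => // W tW cW.
by have [_ [_ [h3 h4]]] := main_W Hirr Hsym con nc hn tW cW.
Qed.
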